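(* Let $g:\{0,1\}^n\to\{0,1\}$ be odd, and for $k\ge 3$ let $G_k=g^{\otimes\binom k2}$ denote the GSWF on $n$ voters and $k$ alternatives with $G_k^{a,b}(x)=g(x^{a,b})$ for all $a\ne b$. Then \[ GCW(G_4)=2\,GCW(G_3)-1, \] and \[ GCW(G_5)=\frac{GCW(G_6)}{3}+\frac{5\,GCW(G_3)}{3}-1. \]
   Context: $g$ odd means $g(1-y_1,\dots,1-y_n)=1-g(y)$. Profiles $x\in(L_k)^n$ are uniform random, $L_k$ the linear orders on $k$ alternatives; $x^{a,b}_i=1$ iff voter $i$ ranks $a$ above $b$. An alternative $a$ is a generalized Condorcet winner (GCW) of $G_k$ at $x$ if $G_k^{a,b}(x)=1$ for all $b\ne a$; $GCW(G_k)=\Pr_x[G_k$ has a GCW at $x]$. *)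

(* Defs.v *)
From mathcomp Require Import all_boot all_order all_algebra all_fingroup.
Set Implicit Arguments. Unset Strict Implicit. Unset Printing Implicit Defensive.

(* Binary vectors {0,1}^n with 0 = false, 1 = true. *)
Definition bvec (n : nat) := {ffun 'I_n -> bool}.

Definition odd_fun (n : nat) (g : bvec n -> bool) : Prop :=
  forall y : bvec n, g [ffun i => ~~ y i] = ~~ g y.

(* A linear order on k alternatives 'I_k is encoded by a permutation
   s : 'S_k, where s a is the position of alternative a (position 0 = top). This is a bijection 'S_k ~ L_k. *)
Definition above (k : nat) (s : 'S_k) (a b : 'I_k) : bool := (s a < s b)%N.

Definition profile (n k : nat) := {ffun 'I_n -> 'S_k}.

Definition pairvec (n k : nat) (x : profile n k) (a b : 'I_k) : bvec n :=
  [ffun i => above (x i) a b].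

Definition Gk (n k : nat) (g : bvec n -> bool) (x : profile n k) (a b : 'I_k) : bool :=
  g (pairvec x a b).

Definition is_GCW (n k : nat) (g : bvec n -> bool) (x : profile n k) (a : 'I_k) : bool :=
  [forall b : 'I_k, (b != a) ==> Gk g x a b].

Definition GCW (n k : nat) (g : bvec n -> bool) : rat :=
  (#|[set x : profile n k | [exists a : 'I_k, is_GCW g x a]]|%:R
     / #|{: profile n k}|%:R)%R.

(* Main.v *)
Require Import Defs.
From mathcomp Require Import all_boot all_order all_algebra all_fingroup.
From mathcomp Require Import zify ring lra.
Set Implicit Arguments. Unset Strict Implicit. Unset Printing Implicit Defensive.

Definition rk (k m : nat) (e : 'I_m -> 'I_k) (s : 'S_k) (i : 'I_m) : nat :=
  #|[set j | (s (e j) < s (e i))%N]|.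

Lemma rk_lt k m (e : 'I_m -> 'I_k) (s : 'S_k) i : (rk e s i < m)%N.
Proof.
rewrite /rk -[X in (_ < X)%N]card_ord.
apply: proper_card; apply/properP; split.
  by apply/subsetP => j _.
by exists i => //; rewrite inE ltnn.
Qed.

Lemma rk_mono k m (e : 'I_m -> 'I_k) (s : 'S_k) i j :
  (s (e i) < s (e j))%N -> (rk e s i < rk e s j)%N.
Proof.
move=> h; rewrite /rk; apply: proper_card; apply/properP; split.
  by apply/subsetP => l; rewrite !inE => hl; apply: ltn_trans hl h.
by exists i; rewrite !inE ?ltnn.
Qed.

Lemma rk_ltE k m (e : 'I_m -> 'I_k) (he : injective e) (s : 'S_k) i j :
  (rk e s i < rk e s j)%N = (s (e i) < s (e j))%N.
Proof.
case: (ltngtP (s (e i)) (s (e j))) => h.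
- by rewrite rk_mono.
- by apply/negbTE; rewrite -leqNgt ltnW // rk_mono.
- have : s (e i) = s (e j) by apply: val_inj.
  by move/perm_inj/he => ->; rewrite ltnn.
Qed.

Lemma rk_inj k m (e : 'I_m -> 'I_k) (he : injective e) (s : 'S_k) :
  injective (fun i => Ordinal (rk_lt e s i)).
Proof.
move=> i j [] h.
apply/eqP; apply/negPn/negP => hij.
case: (ltngtP (s (e i)) (s (e j))) => c.
- by move: (rk_mono c); rewrite h ltnn.
- by move: (rk_mono c); rewrite h ltnn.
- have : s (e i) = s (e j) by apply: val_inj.
  by move/perm_inj/he => eij; rewrite eij eqxx in hij.
Qed.

Definition rperm k m (e : 'I_m -> 'I_k) (he : injective e) (s : 'S_k) : 'S_m :=
  perm (@rk_inj k m e he s).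

Lemma rperm_above k m (e : 'I_m -> 'I_k) (he : injective e) (s : 'S_k) i j :
  above (rperm he s) i j = above s (e i) (e j).
Proof. by rewrite /above /rperm !permE /= rk_ltE. Qed.

Definition lfun k m (e : 'I_m -> 'I_k) (u : 'S_m) (y : 'I_k) : 'I_k :=
  if [pick i | e i == y] is Some i then e (u i) else y.

Lemma lfun_inj k m (e : 'I_m -> 'I_k) (he : injective e) u : injective (lfun e u).
Proof.
move=> y1 y2; rewrite /lfun.
case: pickP => [i1 /eqP h1|n1]; case: pickP => [i2 /eqP h2|n2].
- by move/he/perm_inj => e12; rewrite -h1 -h2 e12.
- by move=> h; move: (n2 (u i1)); rewrite h eqxx.
- by move=> h; move: (n1 (u i2)); rewrite -h eqxx.
- by [].
Qed.

Lemma lfun_e k m (e : 'I_m -> 'I_k) (he : injective e) u i : lfun e u (e i) = e (u i).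
Proof.
rewrite /lfun; case: pickP => [i' /eqP /he -> //|n].
by move: (n i); rewrite eqxx.
Qed.

Definition lperm k m (e : 'I_m -> 'I_k) (he : injective e) u : 'S_k := perm (@lfun_inj k m e he u).

Lemma rperm_equiv k m (e : 'I_m -> 'I_k) (he : injective e) (u : 'S_m) (s : 'S_k) :
  rperm he (lperm he u * s)%g = (u * rperm he s)%g.
Proof.
apply/permP => i; rewrite permM /rperm !permE; apply: val_inj => /=.
rewrite /rk.
rewrite -[RHS](card_preimset _ (@perm_inj _ u)).
by apply: eq_card => j; rewrite !inE !permM !permE !lfun_e.
Qed.

Lemma fiber_const k m (e : 'I_m -> 'I_k) (he : injective e) t t' :
  #|[set s | rperm he s == t]| = #|[set s | rperm he s == t']|.
Proof.
set u := (t * t'^-1)%g.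
rewrite -(card_preimset _ (mulgI (lperm he u))).
apply: eq_card => s; rewrite !inE rperm_equiv /u.
apply/eqP/eqP => [h|->]; last by rewrite mulgKV.
by apply: (mulgI (t * t'^-1)%g); rewrite h mulgKV.
Qed.

Lemma fiber_card k m (e : 'I_m -> 'I_k) (he : injective e) :
  k`! = m`! * #|[set s | rperm he s == 1%g]|.
Proof.
have h : #|{perm 'I_k}| = \sum_(t : 'S_m) #|[set s | rperm he s == t]|.
  rewrite -sum1_card (partition_big (rperm he) predT) //.
  apply: eq_bigr => t _; rewrite -sum1_card; apply: eq_bigl => s; by rewrite inE.
rewrite card_Sn in h; rewrite h -card_Sn -sum_nat_const; apply: eq_bigr => t _.
by rewrite (fiber_const he 1%g t).
Qed.

Definition rprof n k m (e : 'I_m -> 'I_k) (he : injective e) (x : profile n k) : profile n m :=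
  [ffun i => rperm he (x i)].

Lemma pairvec_r n k m (e : 'I_m -> 'I_k) (he : injective e) (x : profile n k) a b :
  pairvec (rprof he x) a b = pairvec x (e a) (e b).
Proof. by apply/ffunP => i; rewrite !ffunE rperm_above. Qed.

Lemma foldr_const (T : Type) (c : nat) (s : seq T) :
  foldr muln 1 (map (fun _ => c) s) = c ^ size s.
Proof. by elim: s => //= x s ->; rewrite expnS. Qed.

Lemma fiber_prof n k m (e : 'I_m -> 'I_k) (he : injective e) (y : profile n m) :
  #|[set x : profile n k | rprof he x == y]| = #|[set s | rperm he s == 1%g]| ^ n.
Proof.
transitivity #|family (fun i => [pred s | rperm he s == y i])|.
  apply: eq_card => x; rewrite inE; apply/idP/idP => [/eqP h|].
    by apply/familyP => i; rewrite -h inE ffunE.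
  move=> /familyP h; apply/eqP.
  by apply/ffunP => i; rewrite ffunE; move: (h i); rewrite inE => /eqP.
rewrite card_family.
have -> : [seq #|[pred s | rperm he s == y i]| | i : 'I_n] =
          map (fun _ => #|[set s | rperm he s == 1%g]|) (enum 'I_n).
  apply: eq_map => i; rewrite (fiber_const he _ (y i)).
  by apply: eq_card => s; rewrite inE.
by rewrite foldr_const size_enum_ord.
Qed.

Lemma marg n k m (e : 'I_m -> 'I_k) (he : injective e) (P : pred (profile n m)) :
  #|[set x : profile n k | P (rprof he x)]| * m`! ^ n = #|[set y | P y]| * k`! ^ n.
Proof.
have -> : #|[set x : profile n k | P (rprof he x)]| =
          \sum_(y | P y) #|[set x : profile n k | rprof he x == y]|.
  rewrite -sum1_card (partition_big (rprof he) P); last by move=> x; rewrite inE.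
  apply: eq_bigr => y Py; rewrite -sum1_card; apply: eq_bigl => x.
  by rewrite !inE; case: eqP => [->|_]; rewrite ?Py ?andbF ?andbT.
rewrite (eq_bigr (fun _ => #|[set s | rperm he s == 1%g]| ^ n)); last first.
  by move=> y _; rewrite fiber_prof.
rewrite sum_nat_const (fiber_card he) expnMn.
have -> : #|[pred y | P y]| = #|[set y | P y]| by apply: eq_card => y; rewrite inE.
by rewrite -mulnA [X in _ * X]mulnC.
Qed.

Lemma above_swap k (s : 'S_k) a b : a != b -> above s b a = ~~ above s a b.
Proof.
move=> ab; rewrite /above; case: (ltngtP (s a) (s b)) => // h.
have : s a = s b by apply: val_inj.
by move/perm_inj => e; rewrite e eqxx in ab.
Qed.

Lemma tour n k g (hg : odd_fun g) (x : profile n k) a b :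
  a != b -> Gk g x b a = ~~ Gk g x a b.
Proof.
move=> ab; rewrite /Gk -hg; congr g; apply/ffunP => i.
by rewrite !ffunE above_swap.
Qed.

Lemma card_sum (T : finType) (A : {set T}) : #|A| = \sum_x (x \in A : nat).
Proof. by rewrite -sum1_card big_mkcond; apply: eq_bigr => x _; case: (x \in A). Qed.

Lemma dbl_count (T U : finType) (R : T -> U -> bool) :
  \sum_x #|[set f | R x f]| = \sum_f #|[set x | R x f]|.
Proof.
under eq_bigr => x _ do rewrite card_sum.
rewrite exchange_big; apply: eq_bigr => f _; rewrite card_sum.
by apply: eq_bigr => x _; rewrite !inE.
Qed.

Lemma card_exists_unique (T I : finType) (P : T -> I -> bool) :
  (forall x a b, P x a -> P x b -> a = b) ->
  #|[set x | [exists a, P x a]]| = \sum_a #|[set x | P x a]|.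
Proof.
move=> hu; rewrite -dbl_count card_sum; apply: eq_bigr => x _.
rewrite card_sum inE; case: existsP => [[a Pa]|nP].
  rewrite (bigD1 a) //= inE Pa big1 // => b ba; rewrite inE.
  by case Pb: (P x b) => //; move: ba; rewrite (hu _ _ _ Pb Pa) eqxx.
by rewrite big1 // => a _; rewrite inE; case Pa: (P x a) => //; case: nP; exists a.
Qed.

Lemma gcw_unique n k g (hg : odd_fun g) (x : profile n k) a b :
  is_GCW g x a -> is_GCW g x b -> a = b.
Proof.
move=> /forallP ha /forallP hb; apply/eqP/negPn/negP => ab.
move: (ha b) (hb a); rewrite ab eq_sym ab /= (tour hg x ab).
by case: (Gk g x a b).
Qed.

Lemma gcw_relabel n m g (x : profile n m) a a0 :
  is_GCW g (rprof (@perm_inj _ (tperm a0 a)) x) a0 = is_GCW g x a.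
Proof.
rewrite /is_GCW /Gk; apply/forallP/forallP => h b.
  apply/implyP => ba; move: (h (tperm a0 a b)) => /implyP.
  rewrite pairvec_r tpermK tpermL; apply; apply/eqP => E.
  by move/eqP: ba; apply; rewrite -(tpermK a0 a b) E tpermL.
rewrite pairvec_r tpermL; apply/implyP => hb.
move: (h (tperm a0 a b)) => /implyP; apply; apply/eqP => E.
by move/eqP: hb; apply; rewrite -(tpermK a0 a b) E tpermR.
Qed.

Lemma fact_pow_gt0 m n : (0 < m`! ^ n)%N.
Proof. by rewrite expn_gt0 fact_gt0. Qed.

Lemma gcw_count n m g (hg : odd_fun g) (a0 : 'I_m) :
  #|[set x : profile n m | [exists a, is_GCW g x a]]| =
  m * #|[set y : profile n m | is_GCW g y a0]|.
Proof.
rewrite card_exists_unique; last by move=> x a b; apply: gcw_unique.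
have -> : m * #|[set y : profile n m | is_GCW g y a0]| =
   #|'I_m| * #|[set y : profile n m | is_GCW g y a0]| by rewrite card_ord.
rewrite -sum_nat_const; apply: eq_bigr => a _.
apply/eqP; rewrite -(eqn_pmul2r (fact_pow_gt0 m n)).
rewrite -(marg (@perm_inj _ (tperm a0 a)) (fun y => is_GCW g y a0)).
apply/eqP; congr (_ * _); apply: eq_card => x; rewrite !inE.
by rewrite gcw_relabel.
Qed.

Lemma card_prof n m : #|{: profile n m}| = m`! ^ n.
Proof. by rewrite card_ffun card_Sn card_ord. Qed.

Definition deg n k g (x : profile n k.+1) : nat :=
  #|[pred b | (b != ord0) && Gk g x ord0 b]|.

Definition ext k j (f : {ffun 'I_j -> 'I_k.+1}) (i : 'I_j.+1) : 'I_k.+1 :=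
  if unlift ord0 i is Some i' then f i' else ord0.

Lemma ext_inj k j (f : {ffun 'I_j -> 'I_k.+1}) :
  injectiveb f -> f \in ffun_on (predC1 ord0) -> injective (ext f).
Proof.
move=> /injectiveP fi /ffun_onP f0 i1 i2; rewrite /ext.
case: (unliftP ord0 i1) => [j1 ->|->]; case: (unliftP ord0 i2) => [j2 ->|->] //.
- by move/fi => ->.
- by move=> e; move: (f0 j1); rewrite inE e eqxx.
- by move=> e; move: (f0 j2); rewrite inE -e eqxx.
Qed.

Lemma beats_ext n k j g (f : {ffun 'I_j -> 'I_k.+1}) (fi : injectiveb f)
   (f0 : f \in ffun_on (predC1 ord0)) (x : profile n k.+1) :
  is_GCW g (rprof (ext_inj fi f0) x) ord0 = [forall i, Gk g x ord0 (f i)].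
Proof.
rewrite /is_GCW /Gk; apply/forallP/forallP => h b.
  move: (h (lift ord0 b)); rewrite pairvec_r /ext liftK unlift_none.
  by rewrite eq_sym neq_lift.
apply/implyP => hb; rewrite pairvec_r /ext unlift_none.
by rewrite eq_sym in hb; case: (unlift_some hb) => i _ ->.
Qed.

Lemma deg_sum n k j g :
  (\sum_(x : profile n k.+1) (deg g x) ^_ j) * j.+1`! ^ n =
  k ^_ j * #|[set y : profile n j.+1 | is_GCW g y ord0]| * k.+1`! ^ n.
Proof.
set Q := #|[set y : profile n j.+1 | is_GCW g y ord0]|.
pose R (x : profile n k.+1) (f : {ffun 'I_j -> 'I_k.+1}) :=
  (f \in ffun_on [pred b | (b != ord0) && Gk g x ord0 b]) && injectiveb f.
have -> : \sum_(x : profile n k.+1) (deg g x) ^_ j = \sum_x #|[set f | R x f]|.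
  apply: eq_bigr => x _; rewrite /deg -[j in _ ^_ j]card_ord -card_inj_ffuns_on.
  by apply: eq_card => f; rewrite !inE.
rewrite dbl_count.
pose P (f : {ffun 'I_j -> 'I_k.+1}) := (f \in ffun_on (predC1 ord0)) && injectiveb f.
rewrite (bigID P) /= [X in _ + X]big1 ?addn0; last first.
  move=> f nP; apply/eqP; rewrite cards_eq0; apply/eqP/setP => x; rewrite !inE.
  apply/negP => /andP [/ffun_onP h fi]; case/negP: nP; apply/andP; split => //.
  by apply/ffun_onP => i; move: (h i); rewrite !inE => /andP [].
rewrite big_distrl /=.
rewrite (eq_bigr (fun _ => Q * k.+1`! ^ n)); last first.
  move=> f /andP [f0 fi].
  rewrite -(marg (ext_inj fi f0) (fun y => is_GCW g y ord0)).
  congr (_ * _); apply: eq_card => x; rewrite !inE beats_ext /R fi andbT.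
  apply/ffun_onP/forallP => h i.
    by move: (h i); rewrite inE => /andP [].
  by rewrite inE h andbT; move/ffun_onP: f0 => /(_ i); rewrite inE.
rewrite sum_nat_const mulnA; congr (_ * _ * _).
have hc : #|[set f in ffun_on (predC1 (ord0 : 'I_k.+1)) |
             injectiveb (f : {ffun 'I_j -> 'I_k.+1})]| = k ^_ j.
  by rewrite card_inj_ffuns_on cardC1 !card_ord.
by rewrite -hc; apply: eq_card => f; rewrite !inE.
Qed.

Definition revp k : 'S_k := perm (@rev_ord_inj k).

Definition rvprof n k (x : profile n k) : profile n k := [ffun i => (x i * revp k)%g].

Lemma rvprofK n k : involutive (@rvprof n k).
Proof.
move=> x; apply/ffunP => i; rewrite !ffunE; apply/permP => a.
by rewrite !permM !permE rev_ordK.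
Qed.

Lemma pairvec_rv n k (x : profile n k) a b : pairvec (rvprof x) a b = pairvec x b a.
Proof.
apply/ffunP => i; rewrite !ffunE /above !permM !permE /=.
have := ltn_ord (x i a); have := ltn_ord (x i b) => h1 h2.
move: (x i a : nat) (x i b : nat) h1 h2 => u v h1 h2.
by apply/idP/idP => H; lia.
Qed.

Lemma deg_rv n k g (hg : odd_fun g) (x : profile n k.+1) : deg g (rvprof x) = k - deg g x.
Proof.
have h := cardID [pred b | Gk g x ord0 b] (predC1 (ord0 : 'I_k.+1)).
rewrite cardC1 card_ord /= in h.
have -> : deg g x = #|[predI predC1 ord0 & [pred b | Gk g x ord0 b]]|.
  by apply: eq_card => b; rewrite !inE.
have -> : deg g (rvprof x) = #|[predD predC1 ord0 & [pred b | Gk g x ord0 b]]|.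
  apply: eq_card => b; rewrite !inE /Gk pairvec_rv andbC.
  case hb: (b != ord0); rewrite ?andbF ?andbT //.
  by rewrite -/(Gk g x b ord0) (tour hg) // eq_sym.
move: h; move: #|[predI _ & _]| #|[predD _ & _]| => u v h; lia.
Qed.

Lemma sum_rev n k g (hg : odd_fun g) (F : nat -> nat) :
  \sum_(x : profile n k.+1) F (deg g x) = \sum_(x : profile n k.+1) F (k - deg g x).
Proof.
rewrite (reindex_inj (inv_inj (@rvprofK n k.+1))) /=.
by apply: eq_bigr => x _; rewrite deg_rv.
Qed.

Lemma deg_le n k g (x : profile n k.+1) : deg g x <= k.
Proof.
apply: (@leq_trans #|predC1 (ord0 : 'I_k.+1)|); last by rewrite cardC1 card_ord.
by apply: subset_leq_card; apply/subsetP => b; rewrite !inE => /andP [].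
Qed.

Lemma sum_ident n k g (hg : odd_fun g) (F G : nat -> nat) :
  (forall d, d <= k -> F d + F (k - d) = G d + G (k - d)) ->
  \sum_(x : profile n k.+1) F (deg g x) = \sum_(x : profile n k.+1) G (deg g x).
Proof.
move=> H.
have : \sum_(x : profile n k.+1) F (deg g x) + \sum_(x : profile n k.+1) F (k - deg g x) =
       \sum_(x : profile n k.+1) G (deg g x) + \sum_(x : profile n k.+1) G (k - deg g x).
  by rewrite -!big_split; apply: eq_bigr => x _; apply: H; apply: deg_le.
rewrite -(sum_rev _ hg F) -(sum_rev _ hg G).
move: (\sum_(x : profile n k.+1) F (deg g x)) (\sum_(x : profile n k.+1) G (deg g x)) => u v.
lia.
Qed.

Lemma sum_const_prof n k (c : nat) : \sum_(x : profile n k) c = c * k`! ^ n.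
Proof. by rewrite sum_nat_const card_prof mulnC. Qed.

Lemma ident6 n g (hg : odd_fun g) :
  10 * \sum_(x : profile n 6) (deg g x) ^_ 4 + 240 * 6`! ^ n =
  4 * \sum_(x : profile n 6) (deg g x) ^_ 5 + 60 * \sum_(x : profile n 6) (deg g x) ^_ 2.
Proof.
rewrite !big_distrr /= -sum_const_prof -!big_split /=.
apply: (@sum_ident n 5 g hg (fun d => 10 * d ^_ 4 + 240) (fun d => 4 * d ^_ 5 + 60 * d ^_ 2)).
by move=> d; case: d => [|[|[|[|[|[|d]]]]]].
Qed.

Lemma ident4 n g (hg : odd_fun g) :
  4 * \sum_(x : profile n 4) (deg g x) ^_ 3 + 6 * 4`! ^ n =
  6 * \sum_(x : profile n 4) (deg g x) ^_ 2.
Proof.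
rewrite !big_distrr /= -sum_const_prof -!big_split /=.
apply: (@sum_ident n 3 g hg (fun d => 4 * d ^_ 3 + 6) (fun d => 6 * d ^_ 2)).
by move=> d; case: d => [|[|[|[|d]]]].
Qed.
Unset Implicit Arguments.
Import GRing.Theory Num.Theory.
Local Open Scope ring_scope.


Lemma rat_id1 (q3 q4 t2 t3 a3 a4 : rat) : a3 != 0 -> a4 != 0 ->
  t2 * a3 = 6 * q3 * a4 -> t3 * a4 = 6 * q4 * a4 ->
  4 * t3 + 6 * a4 = 6 * t2 -> 4 * q4 / a4 = 2 * (3 * q3 / a3) - 1.
Proof.
move=> c3 c4 D2' D3' E4.
have ht3 : t3 = 6 * q4 by apply: (mulIf c4).
have hq3 : q3 = t2 * a3 / (6 * a4) by rewrite D2'; field.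
have ht2 : t2 = (4 * t3 + 6 * a4) / 6 by lra.
by rewrite hq3 ht2 ht3; field; rewrite c3 c4.
Qed.
Lemma rat_id2 (q3 q5 q6 s2 s4 s5 a3 a5 a6 : rat) : a3 != 0 -> a5 != 0 -> a6 != 0 ->
  s2 * a3 = 20 * q3 * a6 -> s4 * a5 = 120 * q5 * a6 -> s5 * a6 = 120 * q6 * a6 ->
  10 * s4 + 240 * a6 = 4 * s5 + 60 * s2 ->
  5 * q5 / a5 = 6 * q6 / a6 / 3 + 5 * (3 * q3 / a3) / 3 - 1.
Proof.
move=> c3 c5 c6 D2 D4 D5 E6.
have hs5 : s5 = 120 * q6 by apply: (mulIf c6).
have hq5 : q5 = s4 * a5 / (120 * a6) by rewrite D4; field.
have hq3 : q3 = s2 * a3 / (20 * a6) by rewrite D2; field.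
have hs4 : s4 = (4 * s5 + 60 * s2 - 240 * a6) / 10 by lra.
by rewrite hq5 hs4 hs5 hq3; field; rewrite c3 c5 c6.
Qed.

Theorem mainTheorem9 (n : nat) (g : bvec n -> bool) (hg : odd_fun g) :
  GCW 4 g = 2 * GCW 3 g - 1 /\
  GCW 5 g = GCW 6 g / 3 + 5 * GCW 3 g / 3 - 1.
Proof.
have ex0 (k : nat) : (k`! ^ n)%:R != 0 :> rat by rewrite pnatr_eq0 -lt0n; apply: fact_pow_gt0.
rewrite /GCW !card_prof !(gcw_count hg ord0).
have D2 := @deg_sum n 5 2 g.
have D4 := @deg_sum n 5 4 g.
have D5 := @deg_sum n 5 5 g.
have D2' := @deg_sum n 3 2 g.
have D3' := @deg_sum n 3 3 g.
have E6 := ident6 hg.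
have E4 := ident4 hg.
move: D2 D4 D5 D2' D3' E6 E4.
set Q3 := #|[set y : profile n 3 | is_GCW g y ord0]|.
set Q4 := #|[set y : profile n 4 | is_GCW g y ord0]|.
set Q5 := #|[set y : profile n 5 | is_GCW g y ord0]|.
set Q6 := #|[set y : profile n 6 | is_GCW g y ord0]|.
set S2 := \sum_(x : profile n 6) _ ^_ 2.
set S4 := \sum_(x : profile n 6) _ ^_ 4.
set S5 := \sum_(x : profile n 6) _ ^_ 5.
set T2 := \sum_(x : profile n 4) _ ^_ 2.
set T3 := \sum_(x : profile n 4) _ ^_ 3.
have -> : (5 ^_ 2 = 20)%N by []. have -> : (5 ^_ 4 = 120)%N by [].
have -> : (5 ^_ 5 = 120)%N by []. have -> : (3 ^_ 2 = 6)%N by [].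
have -> : (3 ^_ 3 = 6)%N by [].
have c3 := ex0 3%N; have c4 := ex0 4%N; have c5 := ex0 5%N; have c6 := ex0 6%N.
move: c3 c4 c5 c6.
set a3 := (3`! ^ n)%N; set a4 := (4`! ^ n)%N; set a5 := (5`! ^ n)%N; set a6 := (6`! ^ n)%N.
move=> c3 c4 c5 c6.
move=> /(f_equal (GRing.natmul (1:rat))); rewrite ?natrM => D2.
move=> /(f_equal (GRing.natmul (1:rat))); rewrite ?natrM => D4.
move=> /(f_equal (GRing.natmul (1:rat))); rewrite ?natrM => D5.
move=> /(f_equal (GRing.natmul (1:rat))); rewrite ?natrM => D2'.
move=> /(f_equal (GRing.natmul (1:rat))); rewrite ?natrM => D3'.
move=> /(f_equal (GRing.natmul (1:rat))); rewrite ?natrD ?natrM => E6.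
move=> /(f_equal (GRing.natmul (1:rat))); rewrite ?natrD ?natrM => E4.
rewrite ?natrM.
clearbody Q3 Q4 Q5 Q6 S2 S4 S5 T2 T3 a3 a4 a5 a6.
move: (Q3%:R) (Q4%:R) (Q5%:R) (Q6%:R) (S2%:R) (S4%:R) (S5%:R) (T2%:R) (T3%:R) (a3%:R) (a4%:R) (a5%:R) (a6%:R) c3 c4 c5 c6 D2 D4 D5 D2' D3' E6 E4.
clear.
move=> q3 q4 q5 q6 s2 s4 s5 t2 t3 a3 a4 a5 a6 c3 c4 c5 c6 D2 D4 D5 D2' D3' E6 E4.
split.
  by apply: (rat_id1 _ _ _ _ _ _ c3 c4 D2' D3'); lra.
by apply: (rat_id2 _ _ _ _ _ _ _ _ _ c3 c5 c6 D2 D4 D5); lra.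
Qed.
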